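(* Let $F$ be a non-archimedean local field of characteristic not $2$ with valuation ring $\mathfrak{o}$ and maximal ideal $\mathfrak{p}$, let $\lambda\in\mathfrak{o}$ with $ord_\mathfrak{p}(\lambda)\in\{0,1\}$, and let $H=Mat(2,F)$ with the involution $$\begin{pmatrix} a & b\\ c& d\end{pmatrix}^{\ddagger_\lambda}=\begin{pmatrix} a & c/\lambda\\ b\lambda & d\end{pmatrix}.$$ Suppose $\Lambda$ is a lattice in $F^2$ which has an orthogonal basis with respect to $b$. Then there exists $g\in GO(Mat(2,F),\ddagger_\lambda)$ such that $$End(\Lambda)\cap End(\Lambda^\sharp)\subset g\bigl(Mat(2,\mathfrak{o})\cap Mat(2,\mathfrak{o})^{\ddagger_\lambda}\bigr)g^{-1}.$$
   Context: Here $b$ is the symmetric bilinear form on $F^2$ given by $b((x_1,y_1),(x_2,y_2))=\lambda x_1x_2+y_1y_2$, whose adjoint involution is $\ddagger_\lambda$ (i.e. $b(v,\sigma w)=b(\sigma^{\ddagger_\lambda}v,w)$). A lattice is a finitely generated $\mathfrak{o}$-submodule spanning $F^2$; $\Lambda^\sharp=\{v: b(v,\Lambda)\subset\mathfrak{o}\}$; $End(\Lambda)=\{\sigma\in Mat(2,F):\sigma\Lambda\subset\Lambda\}$; $X^{\ddagger_\lambda}=\{x^{\ddagger_\lambda}:x\in X\}$. $GO(Mat(2,F),\ddagger_\lambda)=\{x\in GL(2,F): x^{\ddagger_\lambda}x\in F\}$. *)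

(* Defs.v *)
From HB Require Import structures.
From mathcomp Require Import all_boot all_order all_algebra.
Set Implicit Arguments. Unset Strict Implicit. Unset Printing Implicit Defensive.
Import Order.TTheory GRing.Theory Num.Theory.
Local Open Scope ring_scope.

Section LocalField.
Variable F : fieldType.
Variable v : F -> int.  (* normalized discrete valuation, meaningful on F^x *)

Definition in_pk (k : int) (x : F) : Prop := x = 0 \/ (k <= v x).
Definition intg (x : F) : Prop := in_pk 0 x.
Definition in_p (x : F) : Prop := in_pk 1 x.

Record nonarch_local_field : Prop := {
  v_mul : forall x y, x != 0 -> y != 0 -> v (x * y) = v x + v y;
  v_add : forall x y, x != 0 -> y != 0 -> x + y != 0 ->
            Num.min (v x) (v y) <= v (x + y);
  v_unif : exists pi : F, pi != 0 /\ v pi = 1;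
  v_complete : forall u : nat -> F,
      (forall k : int, exists N, forall m n, (N <= m)%N -> (N <= n)%N ->
          in_pk k (u m - u n)) ->
      exists l : F, forall k : int, exists N, forall n, (N <= n)%N ->
          in_pk k (u n - l);
  v_res_finite : exists s : seq F, (forall r, r \in s -> intg r) /\
      forall x, intg x -> exists2 r, r \in s & in_p (x - r)
}.

Variable lam : F.

Definition dag (x : 'M[F]_2) : 'M[F]_2 :=
  \matrix_(i < 2, j < 2)
    if (val i == 0%N) && (val j == 0%N) then x 0 0
    else if (val i == 0%N) && (val j == 1%N) then x 1 0 / lam
    else if (val i == 1%N) && (val j == 0%N) then x 0 1 * lam
    else x 1 1.

Definition bform (u w : 'cV[F]_2) : F := lam * u 0 0 * w 0 0 + u 1 0 * w 1 0.

Definition is_lattice (L : 'cV[F]_2 -> Prop) : Prop :=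
  (exists (n : nat) (g : 'I_n -> 'cV[F]_2),
      forall x, L x <-> exists c : 'I_n -> F, (forall i, intg (c i)) /\
                         x = \sum_i c i *: g i) /\
  (forall w : 'cV[F]_2, exists (n : nat) (u : 'I_n -> 'cV[F]_2) (c : 'I_n -> F),
      (forall i, L (u i)) /\ w = \sum_i c i *: u i).

Definition has_orth_basis (L : 'cV[F]_2 -> Prop) : Prop :=
  exists e1 e2 : 'cV[F]_2,
    (forall x, L x <-> exists a c, intg a /\ intg c /\ x = a *: e1 + c *: e2) /\
    (forall a c : F, a *: e1 + c *: e2 = 0 -> a = 0 /\ c = 0) /\
    bform e1 e2 = 0.

Definition dual_lattice (L : 'cV[F]_2 -> Prop) : 'cV[F]_2 -> Prop :=
  fun u => forall w, L w -> intg (bform u w).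

Definition EndL (L : 'cV[F]_2 -> Prop) (s : 'M[F]_2) : Prop :=
  forall u, L u -> L (s *m u).

Definition intmx (x : 'M[F]_2) : Prop := forall i j, intg (x i j).

Definition GO (g : 'M[F]_2) : Prop :=
  g \in unitmx /\ exists c : F, dag g *m g = c%:M.

End LocalField.

(* Main.v *)
Require Import Defs.
From HB Require Import structures.
From mathcomp Require Import all_boot all_order all_algebra.
From mathcomp Require Import ring zify.
Import Order.TTheory GRing.Theory Num.Theory.
Set Implicit Arguments. Unset Strict Implicit.
Local Open Scope ring_scope.

Section H.
Variable F : fieldType.

Lemma mx2_ext (A B : 'M[F]_2) : A 0 0 = B 0 0 -> A 0 1 = B 0 1 ->
  A 1 0 = B 1 0 -> A 1 1 = B 1 1 -> A = B.
Proof.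
move=> h00 h01 h10 h11; apply/matrixP => i j.
have o2 (k : 'I_2) : k = 0 \/ k = 1.
  case: k => [[|[|k]] Hk]; [left|right|by []]; exact: val_inj.
by case: (o2 i) => ->; case: (o2 j) => ->.
Qed.

Lemma sum2 (f : 'I_2 -> F) : \sum_(i < 2) f i = f 0 + f 1.
Proof. rewrite big_ord_recl big_ord1; congr (f _ + f _); exact: val_inj. Qed.

Lemma lc1 (a b c d k : F) : a = b -> c - d = k * (a - b) -> c = d.
Proof. by move=> ->; rewrite subrr mulr0 => /eqP; rewrite subr_eq0 => /eqP. Qed.

Lemma lc2 (a b a' b' c d k k' : F) : a = b -> a' = b' ->
  c - d = k * (a - b) + k' * (a' - b') -> c = d.
Proof. by move=> -> ->; rewrite !subrr !mulr0 addr0 => /eqP; rewrite subr_eq0 => /eqP. Qed.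

Definition mk2 (a b c d : F) : 'M[F]_2 :=
  \matrix_(i < 2, j < 2) if i == 0 then (if j == 0 then a else b)
                          else (if j == 0 then c else d).

Lemma mk2E a b c d : [/\ mk2 a b c d 0 0 = a, mk2 a b c d 0 1 = b,
   mk2 a b c d 1 0 = c & mk2 a b c d 1 1 = d].
Proof. by rewrite /mk2 !mxE. Qed.

Lemma o2 (k : 'I_2) : k = 0 \/ k = 1.
Proof. case: k => [[|[|k]] Hk]; [left|right|by []]; exact: val_inj. Qed.

Lemma cv2_ext (A B : 'cV[F]_2) : A 0 0 = B 0 0 -> A 1 0 = B 1 0 -> A = B.
Proof.
move=> h0 h1; apply/matrixP => i j; have -> : j = 0 by apply: val_inj; case: j => [[|]].
by case: (o2 i) => ->.
Qed.

Lemma dagE lam (m : 'M[F]_2) : [/\ dag lam m 0 0 = m 0 0, dag lam m 0 1 = m 1 0 / lam,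
  dag lam m 1 0 = m 0 1 * lam & dag lam m 1 1 = m 1 1].
Proof. by rewrite /dag !mxE. Qed.

Variable v : F -> int.
Hypothesis HF : nonarch_local_field v.
Variable lam : F.
Hypothesis Hlamv : v lam = 0 \/ v lam = 1.

Lemma v1 : v 1 = 0.
Proof.
have := v_mul HF (oner_neq0 F) (oner_neq0 F); rewrite mulr1 => h.
by apply: (@addrI _ (v 1)); rewrite addr0 -h.
Qed.

Lemma vinv x : x != 0 -> v x^-1 = - v x.
Proof.
move=> hx; have := v_mul HF hx (invr_neq0 hx); rewrite mulfV // v1; lia.
Qed.

Lemma intg_mul x y : intg v x -> intg v y -> intg v (x * y).
Proof.
case=> [->|hx]; first by left; rewrite mul0r.
case=> [->|hy]; first by left; rewrite mulr0.
have [->|x0] := eqVneq x 0; first by left; rewrite mul0r.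
have [->|y0] := eqVneq y 0; first by left; rewrite mulr0.
right; rewrite (v_mul HF x0 y0); lia.
Qed.

Lemma intg_lam : intg v lam.
Proof. right; case: Hlamv => ->; lia. Qed.

Lemma key (z p r d : F) : p != 0 -> r != 0 -> d != 0 -> p * r = lam * d ^+ 2 ->
  intg v z -> intg v (z * p / r) -> intg v (z * d / r).
Proof.
move=> p0 r0 d0 E [->|hz]; first by left; rewrite !mul0r.
have [->|z0] := eqVneq z 0; first by left; rewrite !mul0r.
case=> [/eqP h|h]; first by move: h; rewrite !mulf_eq0 invr_eq0 (negbTE z0) (negbTE p0) (negbTE r0).
right.
have l0 : lam != 0.
  by apply/eqP => l0; move: E; rewrite l0 mul0r => /eqP; rewrite mulf_eq0 (negbTE p0) (negbTE r0).
move: h; rewrite (v_mul HF (mulf_neq0 z0 p0) (invr_neq0 r0)) (v_mul HF z0 p0) vinv //.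
rewrite (v_mul HF (mulf_neq0 z0 d0) (invr_neq0 r0)) (v_mul HF z0 d0) vinv //.
have := congr1 v E; rewrite (v_mul HF p0 r0) (v_mul HF l0 (expf_neq0 2 d0)) expr2 (v_mul HF d0 d0).
case: Hlamv; lia.
Qed.
Lemma intmx_mk2 a b c d : intg v a -> intg v b -> intg v c -> intg v d ->
  intmx v (mk2 a b c d).
Proof.
move=> ha hb hc hd i j; case: (mk2E a b c d) => e00 e01 e10 e11.
by case: (o2 i) => ->; case: (o2 j) => ->; rewrite ?e00 ?e01 ?e10 ?e11.
Qed.

Lemma intg1 : intg v 1.
Proof. by right; rewrite v1. Qed.
End H.


Unset Implicit Arguments. Set Strict Implicit.
Ltac sides := repeat (apply/andP; split); try done; try assumption.

Theorem lemma5p5 (F : fieldType) (v : F -> int)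
  (HF : nonarch_local_field v) (Hchar : (2%:R : F) != 0)
  (lam : F) (Hlam0 : lam != 0) (Hlamv : v lam = 0 \/ v lam = 1)
  (L : 'cV[F]_2 -> Prop) (HL : is_lattice v L) (Horth : has_orth_basis v lam L) :
  exists g : 'M[F]_2, GO lam g /\
    forall s : 'M[F]_2, EndL L s -> EndL (dual_lattice v lam L) s ->
      exists x : 'M[F]_2,
        (intmx v x /\ exists y : 'M[F]_2, intmx v y /\ x = dag lam y) /\
        s = g *m x *m invmx g.
Proof.
case: Horth => e1 [e2 [HLe [Hind Hb]]].
have Ho : lam * e1 0 0 * e2 0 0 + e1 1 0 * e2 1 0 = 0 by exact: Hb.
pose d := e1 0 0 * e2 1 0 - e2 0 0 * e1 1 0.
pose a1 := lam * e1 0 0 * e1 0 0 + e1 1 0 * e1 1 0.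
pose a2 := lam * e2 0 0 * e2 0 0 + e2 1 0 * e2 1 0.
have d0 : d != 0.
  apply/eqP => hd.
  have [hy2 hy1] : e2 1 0 = 0 /\ - e1 1 0 = 0.
    apply: Hind; apply: cv2_ext; rewrite !mxE.
      by rewrite -hd /d; ring.
    by ring.
  have hy1' : e1 1 0 = 0 by rewrite -[e1 1 0]opprK hy1 oppr0.
  have [hx2 hx1] : e2 0 0 = 0 /\ - e1 0 0 = 0.
    apply: Hind; apply: cv2_ext; rewrite !mxE.
      by ring.
    by rewrite hy2 hy1'; ring.
  have hx1' : e1 0 0 = 0 by rewrite -[e1 0 0]opprK hx1 oppr0.
  have [h1 _] : (1 : F) = 0 /\ (0 : F) = 0.
    apply: Hind; apply: cv2_ext; rewrite !mxE ?hx1' ?hy1' ?hx2 ?hy2; ring.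
  by move/eqP: h1; rewrite oner_eq0.
have Ea : a1 * a2 = lam * d ^+ 2.
  by apply: (lc1 (k := lam * e1 0 0 * e2 0 0 + e1 1 0 * e2 1 0) Ho); rewrite /a1 /a2 /d; ring.
have a12 : a1 * a2 != 0 by rewrite Ea mulf_neq0 // expf_neq0.
have a10 : a1 != 0 by apply: contraNneq a12 => ->; rewrite mul0r.
have a20 : a2 != 0 by apply: contraNneq a12 => ->; rewrite mulr0.
pose q := a2 / d.
pose g := mk2 (e1 0 0 * q) (e2 0 0) (e1 1 0 * q) (e2 1 0).
have [g00 g01 g10 g11] : [/\ g 0 0 = e1 0 0 * q, g 0 1 = e2 0 0, g 1 0 = e1 1 0 * q & g 1 1 = e2 1 0] := mk2E _ _ _ _.
have Hdg : dag lam g *m g = a2%:M.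
  case: (dagE lam g) => dg00 dg01 dg10 dg11.
  apply: mx2_ext; rewrite !mxE !sum2 /= ?dg00 ?dg01 ?dg10 ?dg11 ?g00 ?g01 ?g10 ?g11 ?mulr1n ?mulr0n.
  - apply: (lc1 (k := a2 * (lam * e1 0 0 * e2 0 0 + e1 1 0 * e2 1 0) / (d ^+ 2 * lam)) Ho).
    rewrite /q /a1 /a2 /d; field.
    sides.
  - apply: (lc1 (k := q / lam) Ho); rewrite /q; field; sides.
  - apply: (lc1 (k := q) Ho); rewrite /q; field; sides.
  - by rewrite /a2; field.
have gU : g \in unitmx.
  have [] := @mulmx1_unit _ _ (a2^-1 *: dag lam g) g => //.
  by rewrite -scalemxAl Hdg scale_scalar_mx mulVf.
exists g; split; first by split=> //; exists a2.
move=> s Hs1 Hs2.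
have Le1 : L e1.
  by apply/HLe; exists 1, 0; rewrite scale1r scale0r addr0; do !split=> //; [exact: (intg1 HF) | left].
have Le2 : L e2.
  by apply/HLe; exists 0, 1; rewrite scale1r scale0r add0r; do !split=> //; [left | exact: (intg1 HF)].
have [t00 [t10 [it00 [it10 Es1]]]] := (iffLR (HLe _)) (Hs1 _ Le1).
have [t01 [t11 [it01 [it11 Es2]]]] := (iffLR (HLe _)) (Hs1 _ Le2).
have E00 : s 0 0 * e1 0 0 + s 0 1 * e1 1 0 = t00 * e1 0 0 + t10 * e2 0 0.
  by have := congr1 (fun m : 'cV[F]_2 => m 0 0) Es1; rewrite !mxE !sum2.
have E10 : s 1 0 * e1 0 0 + s 1 1 * e1 1 0 = t00 * e1 1 0 + t10 * e2 1 0.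
  by have := congr1 (fun m : 'cV[F]_2 => m 1 0) Es1; rewrite !mxE !sum2.
have E01 : s 0 0 * e2 0 0 + s 0 1 * e2 1 0 = t01 * e1 0 0 + t11 * e2 0 0.
  by have := congr1 (fun m : 'cV[F]_2 => m 0 0) Es2; rewrite !mxE !sum2.
have E11 : s 1 0 * e2 0 0 + s 1 1 * e2 1 0 = t01 * e1 1 0 + t11 * e2 1 0.
  by have := congr1 (fun m : 'cV[F]_2 => m 1 0) Es2; rewrite !mxE !sum2.
have Du1 : dual_lattice v lam L (a1^-1 *: e1).
  move=> w /HLe [a [c [ia [_ ->]]]].
  suff -> : bform lam (a1^-1 *: e1) (a *: e1 + c *: e2) = a by [].
  rewrite /bform !mxE; apply: (lc1 (k := c / a1) Ho); rewrite /a1; field; sides.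
have Du2 : dual_lattice v lam L (a2^-1 *: e2).
  move=> w /HLe [a [c [_ [ic ->]]]].
  suff -> : bform lam (a2^-1 *: e2) (a *: e1 + c *: e2) = c by [].
  rewrite /bform !mxE; apply: (lc1 (k := a / a2) Ho); rewrite /a2; field; sides.
have i10 : intg v (t10 * a2 / a1).
  have := Hs2 _ Du1 _ Le2.
  rewrite -scalemxAr Es1 /bform !mxE.
  suff -> : lam * (a1^-1 * (t00 * e1 0 0 + t10 * e2 0 0)) * e2 0 0 +
     a1^-1 * (t00 * e1 1 0 + t10 * e2 1 0) * e2 1 0 = t10 * a2 / a1 by [].
  apply: (lc1 (k := t00 / a1) Ho); rewrite /a2; field; sides.
have i01 : intg v (t01 * a1 / a2).
  have := Hs2 _ Du2 _ Le1.
  rewrite -scalemxAr Es2 /bform !mxE.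
  suff -> : lam * (a2^-1 * (t01 * e1 0 0 + t11 * e2 0 0)) * e1 0 0 +
     a2^-1 * (t01 * e1 1 0 + t11 * e2 1 0) * e1 1 0 = t01 * a1 / a2 by [].
  apply: (lc1 (k := t11 / a2) Ho); rewrite /a1; field; sides.
have iB : intg v (t10 * d / a1).
  apply: (key HF Hlamv a20 a10 d0) => //; by rewrite mulrC.
have iA : intg v (t01 * d / a2) by apply: (key HF Hlamv a10 a20 d0).
pose x := mk2 t00 (t01 * d / a2) (t10 * d / a1 * lam) t11.
pose y := mk2 t00 (t10 * d / a1) (t01 * d / a2 * lam) t11.
have [x00 x01 x10 x11] : [/\ x 0 0 = t00, x 0 1 = t01 * d / a2, x 1 0 = t10 * d / a1 * lam & x 1 1 = t11] := mk2E _ _ _ _.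
have [y00 y01 y10 y11] : [/\ y 0 0 = t00, y 0 1 = t10 * d / a1, y 1 0 = t01 * d / a2 * lam & y 1 1 = t11] := mk2E _ _ _ _.
have il := intg_lam Hlamv.
exists x; split.
  split; first by apply: intmx_mk2 => //; apply: (intg_mul HF Hlamv).
  exists y; split; first by apply: intmx_mk2 => //; apply: (intg_mul HF Hlamv).
  case: (dagE lam y) => dy00 dy01 dy10 dy11.
  apply: mx2_ext; rewrite ?dy00 ?dy01 ?dy10 ?dy11 ?x00 ?x01 ?x10 ?x11 ?y00 ?y01 ?y10 ?y11 //.
  by field; sides.
have Hsg : s *m g = g *m x.
  apply: mx2_ext; rewrite !mxE !sum2 ?g00 ?g01 ?g10 ?g11 ?x00 ?x01 ?x10 ?x11.
  - apply: (lc2 (k := q) (k' := e2 0 0 * t10 * (lam * e1 0 0 * e2 0 0 + e1 1 0 * e2 1 0) / (d * a1)) E00 Ho).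
    rewrite /q /a1 /a2 /d; field; sides.
  - apply: (lc1 (k := 1) E01); rewrite /q; field; sides.
  - apply: (lc2 (k := q) (k' := e2 1 0 * t10 * (lam * e1 0 0 * e2 0 0 + e1 1 0 * e2 1 0) / (d * a1)) E10 Ho).
    rewrite /q /a1 /a2 /d; field; sides.
  - apply: (lc1 (k := 1) E11); rewrite /q; field; sides.
by rewrite -Hsg mulmxK.
Qed.
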